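(* In any symmetric $2\times 2$ game (a symmetric two-player game $(X,\pi)$ with $|X|=2$), imitation is essentially unbeatable.
   Context: $\pi:X\times X\to\mathbb{R}$, $\pi(x,y)$ = payoff of the player choosing $x$ against $y$. Relative payoff: $\Delta(x,y)=\pi(x,y)-\pi(y,x)$, and $\hat\Delta:=\max_{x,y\in X}\Delta(x,y)$. Imitate-the-best: given initial $y_0\in X$ and any opponent sequence $(x_t)_{t\ge0}$ in $X$, $y_t=x_{t-1}$ if $\Delta(x_{t-1},y_{t-1})>0$ and $y_t=y_{t-1}$ otherwise. Imitation is essentially unbeatable if for every $y_0\in X$ and every sequence $(x_t)$, $\limsup_{T\to\infty}\sum_{t=0}^T\Delta(x_t,y_t)\le\hat\Delta$. *)

(* Defs.v *)
From Stdlib Require Import Reals.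
From Coquelicot Require Import Coquelicot.
Open Scope R_scope.

Definition rel_payoff {X : Type} (pi : X -> X -> R) (x y : X) : R :=
  pi x y - pi y x.

Definition is_max_rel_payoff {X : Type} (pi : X -> X -> R) (hatD : R) : Prop :=
  (exists x y, rel_payoff pi x y = hatD) /\
  (forall x y, rel_payoff pi x y <= hatD).

Fixpoint imitate {X : Type} (pi : X -> X -> R) (y0 : X) (xs : nat -> X)
  (t : nat) : X :=
  match t with
  | O => y0
  | S t' => let y := imitate pi y0 xs t' in
            if Rlt_dec 0 (rel_payoff pi (xs t') y) then xs t' else y
  end.

Definition cum_rel_payoff {X : Type} (pi : X -> X -> R) (y0 : X) (xs : nat -> X)
  (T : nat) : R :=
  sum_f_R0 (fun t => rel_payoff pi (xs t) (imitate pi y0 xs t)) T.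

Definition ess_unbeatable {X : Type} (pi : X -> X -> R) (hatD : R) : Prop :=
  forall (y0 : X) (xs : nat -> X),
    Rbar_le (LimSup_seq (cum_rel_payoff pi y0 xs)) (Finite hatD).

(* Main.v *)
Require Import Defs.
From Stdlib Require Import Reals Lra.
From Coquelicot Require Import Coquelicot.
Open Scope R_scope.

Lemma key (X : Type) (a b : X) (hX : forall x : X, x = a \/ x = b)
  (pi : X -> X -> R) u v : rel_payoff pi u v > 0 -> forall x, rel_payoff pi x u <= 0.
Proof.
  unfold rel_payoff; intros H x.
  destruct (hX x) as [->| ->]; destruct (hX u) as [->| ->];
  try lra; destruct (hX v) as [->| ->]; lra.
Qed.

Theorem proposition2 (X : Type) (a b : X) (hab : a <> b)
  (hX : forall x : X, x = a \/ x = b)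
  (pi : X -> X -> R) (hatD : R) (hD : is_max_rel_payoff pi hatD) :
  ess_unbeatable pi hatD.
Proof.
  intros y0 xs.
  destruct hD as [_ hmax].
  set (y := imitate pi y0 xs).
  set (Q := fun n => forall x, rel_payoff pi x (y n) <= 0).
  assert (QS : forall n, Q n -> Q (S n)).
  { intros n Hq. unfold Q in *. unfold y in *. simpl.
    destruct (Rlt_dec 0 _) as [h|h]; [exfalso; specialize (Hq (xs n)); lra|exact Hq]. }
  assert (step : forall s n, s <= 0 ->
     s + rel_payoff pi (xs n) (y n) <= 0 \/
     (s + rel_payoff pi (xs n) (y n) <= hatD /\ Q (S n))).
  { intros s n hs. specialize (hmax (xs n) (y n)).
    destruct (Rle_dec (rel_payoff pi (xs n) (y n)) 0) as [h|h]; [left; lra|right].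
    split; [lra|]. unfold Q, y; simpl. fold (y n).
    destruct (Rlt_dec 0 _) as [h'|h']; [|lra].
    exact (key X a b hX pi _ _ h'). }
  assert (inv : forall T, cum_rel_payoff pi y0 xs T <= 0 \/
            (cum_rel_payoff pi y0 xs T <= hatD /\ Q (S T))).
  { induction T as [|T IH].
    - unfold cum_rel_payoff; simpl. fold (y 0%nat).
      destruct (step 0 0%nat (Rle_refl 0)) as [h|h]; rewrite Rplus_0_l in h; auto.
    - unfold cum_rel_payoff in *. cbn [sum_f_R0].
      change (imitate pi y0 xs (S T)) with (y (S T)).
      set (s := sum_f_R0 _ T) in *.
      destruct IH as [h|[h1 h2]].
      + apply step; exact h.
      + right. split; [|now apply QS].
        specialize (h2 (xs (S T))). lra. }
  rewrite <- (LimSup_seq_const hatD).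
  apply LimSup_le. exists 0%nat. intros T _.
  destruct (inv T) as [h|[h _]]; [|exact h].
  assert (0 <= hatD) by (specialize (hmax a a); unfold rel_payoff in hmax; lra). lra.
Qed.
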